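(* Let $c_1,\dots,c_{n-1}$ be free generators of a free $\mathbb Z$-module, put $c_0=-(c_1+\dots+c_{n-1})$, and set $c_i=c_{i'}$ whenever $i\equiv i'\pmod n$ ($i\in\mathbb Z$). For $i,j\in\mathbb Z$ let $c_{i,j}=c_{i-1}+c_{i-2}+\dots+c_{j'}$, where $j'\le i$ is an integer with $j'\equiv j\pmod n$. This does not depend on the choice of $j'$ since $c_0+\dots+c_{n-1}=0$; the sum is empty, hence $0$, if $j'=i$. Let $i_1,\dots,i_n$ be integers. Then the following are equivalent: 1. modulo $n$, the set $\{i_1,\dots,i_n\}$ coincides with $\{1,\dots,n\}$; 2. $\sum_{m=1}^nc_{i_m}=0$; 3. $\sum_{m=1}^nc_{i_m,m}=0$.
   Context: $n\ge3$ is a fixed integer. *)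

(* Defs.v *)
From HB Require Import structures.
From mathcomp Require Import all_boot all_order all_algebra.
Set Implicit Arguments. Unset Strict Implicit. Unset Printing Implicit Defensive.
Import Order.TTheory GRing.Theory Num.Theory.
Local Open Scope ring_scope.

(* The free Z-module with free generators c_1, ..., c_{n-1} is modelled as
   'rV[int]_(n.-1); c_k (1 <= k <= n-1) is the standard basis row vector with
   a 1 in position k-1. *)

Definition cnat (n : nat) (k : nat) : 'rV[int]_(n.-1) :=
  if k == 0%N then - \sum_(j < n.-1) \row_(l < n.-1) (l == j)%:Z
  else \row_(l < n.-1) (l.+1 == k)%:Z.

Definition cZ (n : nat) (i : int) : 'rV[int]_(n.-1) :=
  cnat n `|(i %% n%:Z)%Z|%N.

(* c_{i,j} = c_{i-1} + ... + c_{j'} with j' = i - ((i - j) mod n),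
   i.e. j' <= i, j' = j (mod n), j' > i - n (empty sum if j' = i). *)
Definition cij (n : nat) (i j : int) : 'rV[int]_(n.-1) :=
  let d := `|((i - j) %% n%:Z)%Z|%N in
  \sum_(t < d) cZ n (i - d%:Z + t%:Z).

(* Main.v *)
Require Import Defs.
From HB Require Import structures.
From mathcomp Require Import all_boot all_order all_algebra.
From mathcomp Require Import zify.
Import Order.TTheory GRing.Theory Num.Theory.
Local Open Scope ring_scope.
Set Implicit Arguments. Unset Strict Implicit.

Definition cnt n (i : 'I_n.+1 -> int) (k : nat) : nat :=
  #|[pred m | `|(i m %% n.+1%:Z)%Z|%N == k]|.

Lemma absmod_lt n (x : int) : (`|(x %% n.+1%:Z)%Z| < n.+1)%N.
Proof.
have h1 := @modz_ge0 x (n.+1%:Z) isT.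
have h2 := @ltz_mod x (n.+1%:Z) isT.
by rewrite -ltz_nat gez0_abs.
Qed.

Lemma part n (V : zmodType) (G : nat -> V) (i : 'I_n.+1 -> int) :
  \sum_(m < n.+1) G `|(i m %% n.+1%:Z)%Z|%N = \sum_(k < n.+1) G k *+ cnt i k.
Proof.
rewrite (partition_big (fun m => (inord `|(i m %% n.+1%:Z)%Z|%N : 'I_n.+1)) predT) //=.
apply: eq_bigr => k _.
rewrite -sumr_const /cnt.
apply: eq_big => m /=.
  by rewrite -val_eqE /= inordK ?absmod_lt.
by rewrite -val_eqE /= inordK ?absmod_lt // => /eqP ->.
Qed.

Lemma coord n (w : nat -> int) (l : 'I_n) :
  (\sum_(k < n.+1) w k *: cnat n.+1 k) 0 l = w l.+1 - w 0.
Proof.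
rewrite summxE big_ord_recl /= /cnat /=.
rewrite !mxE summxE.
under eq_bigr do rewrite mxE.
under eq_bigr do rewrite mxE.
rewrite /bump /=.
under [X in _ * - X]eq_bigr do rewrite mxE.
rewrite (bigD1 l) //= eqxx big1 /=; last first.
  by move=> j; rewrite eq_sym => /negbTE ->.
rewrite (eq_bigr (fun i : 'I_n => if i == l then w l.+1 else 0)); last first.
  move=> j _; rewrite add1n eqSS val_eqE eq_sym.
  by case: eqP => [->|]; rewrite ?mulr1 ?mulr0.
rewrite -big_mkcond big_pred1_eq.
by rewrite addr0 mulrN1 addrC.
Qed.

Lemma zero_iff n (w : nat -> int) :
  \sum_(k < n.+1) w k *: cnat n.+1 k = 0 <-> forall l : 'I_n, w l.+1 = w 0.
Proof.
split.
  move=> h l; apply/eqP; rewrite -subr_eq0 -coord h; by rewrite mxE.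
move=> h; apply/rowP => l; rewrite coord h subrr; by rewrite mxE.
Qed.

Lemma sumcZ n (i : 'I_n.+1 -> int) :
  \sum_(m < n.+1) cZ n.+1 (i m) = \sum_(k < n.+1) (cnt i k)%:Z *: cnat n.+1 k.
Proof.
rewrite /cZ (part (cnat n.+1)); apply: eq_bigr => k _.
by rewrite -scaler_nat natz.
Qed.

Lemma sum_cnt n (i : 'I_n.+1 -> int) : (\sum_(k < n.+1) cnt i k)%N = n.+1.
Proof.
have := part (fun _ => (1 : int)) i.
rewrite sumr_const card_ord => h.
apply/eqP; rewrite -eqz_nat -natz -[X in _ == X]natz h natr_sum.
by apply/eqP; apply: eq_bigr => k _.
Qed.

Definition all_one n (i : 'I_n.+1 -> int) := forall k, (k < n.+1)%N -> cnt i k = 1%N.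

Lemma cond2 n (i : 'I_n.+1 -> int) :
  \sum_(m < n.+1) cZ n.+1 (i m) = 0 <-> all_one i.
Proof.
rewrite sumcZ; split.
  move/(zero_iff n (fun k => (cnt i k)%:Z))=> h.
  have e : forall k, (k < n.+1)%N -> cnt i k = cnt i 0.
    case=> [|k] // hk.
    have := h (Ordinal (hk : (k < n)%N)) => /= /eqP; rewrite eqz_nat => /eqP //.
  have hs := sum_cnt i.
  rewrite (eq_bigr (fun _ => cnt i 0)) in hs; last by move=> k _; apply: e.
  rewrite sum_nat_const card_ord in hs.
  move=> k hk; rewrite e //.
  have : (n.+1 * cnt i 0 = n.+1 * 1)%N by rewrite muln1.
  by move/eqP; rewrite eqn_pmul2l // => /eqP.
move=> h; apply/(zero_iff n (fun k => (cnt i k)%:Z)) => l; rewrite !h //.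
by rewrite ltnS ltn_ord.
Qed.


Lemma absmod_eq n (x : int) : (x %% n.+1%:Z)%Z = `|(x %% n.+1%:Z)%Z|%N%:Z.
Proof. by rewrite gez0_abs // modz_ge0. Qed.

Lemma pos_one n (i : 'I_n.+1 -> int) :
  (forall k, (k < n.+1)%N -> (0 < cnt i k)%N) -> all_one i.
Proof.
move=> hp.
have hs := sum_cnt i.
have e : (\sum_(k < n.+1) (cnt i k - 1) + \sum_(k < n.+1) 1 = \sum_(k < n.+1) cnt i k)%N.
  rewrite -big_split /=; apply: eq_bigr => k _; rewrite subnK //; exact: hp.
rewrite hs sum_nat_const card_ord muln1 -[X in _ = X]add0n in e.
move/addIn: e => /eqP; rewrite sum_nat_eq0 => /forallP h k hk.
have := h (Ordinal hk); rewrite subn_eq0 /= => h1.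
by apply/eqP; rewrite eqn_leq h1 hp.
Qed.

Lemma rhs_mem n (x : int) :
  (x \in [seq ((m.+1)%:Z %% n.+1%:Z)%Z | m : 'I_n.+1]) = (0 <= x) && (x < n.+1%:Z).
Proof.
apply/mapP/idP.
  case=> m _ ->; rewrite modz_ge0 //=.
  exact: (@ltz_mod _ (n.+1%:Z)).
case/andP=> h0 h1.
have [x0|xn0] := eqVneq x 0.
  exists ord_max; first by rewrite mem_enum.
  by rewrite x0 /= modzz.
have hx : x = `|x|%N%:Z by rewrite gez0_abs.
have hpos : (0 < `|x|)%N by rewrite absz_gt0.
have hlt : (`|x|.-1 < n.+1)%N.
  rewrite hx ltz_nat in h1; by rewrite prednK // ltnW.
exists (Ordinal hlt); first by rewrite mem_enum.
by rewrite /= prednK // -hx modz_small // h0 h1.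
Qed.

Lemma cond1 n (i : 'I_n.+1 -> int) :
  ([seq (i m %% n.+1%:Z)%Z | m : 'I_n.+1] =i [seq ((m.+1)%:Z %% n.+1%:Z)%Z | m : 'I_n.+1])
  <-> all_one i.
Proof.
split.
  move=> h; apply: pos_one => k hk.
  have : k%:Z \in [seq (i m %% n.+1%:Z)%Z | m : 'I_n.+1].
    by rewrite h rhs_mem /= ltz_nat.
  case/mapP=> m _ e.
  apply/card_gt0P; exists m; rewrite inE /= -e //.
move=> h x; rewrite rhs_mem.
apply/mapP/idP.
  case=> m _ ->; rewrite modz_ge0 //=.
  exact: (@ltz_mod _ (n.+1%:Z)).
case/andP=> h0 h1.
have hx : x = `|x|%N%:Z by rewrite gez0_abs.
have hlt : (`|x| < n.+1)%N by rewrite -ltz_nat -hx.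
have := h _ hlt => hc.
have : (0 < cnt i `|x|)%N by rewrite hc.
case/card_gt0P=> m; rewrite inE /= => /eqP e.
exists m; first by rewrite mem_enum.
by rewrite absmod_eq e -hx.
Qed.

Definition F n k : 'rV[int]_n := \sum_(t < k) cnat n.+1 t.
Definition fZ n (x : int) := F n `|(x %% n.+1%:Z)%Z|%N.

Lemma Ffull n : F n n.+1 = 0.
Proof.
rewrite /F (eq_bigr (fun t : 'I_n.+1 => (fun _ => (1:int)) t *: cnat n.+1 t)); last first.
  by move=> t _; rewrite scale1r.
by apply/(zero_iff n (fun _ => 1)).
Qed.

Lemma step n x : fZ n (x + 1) - fZ n x = cZ n.+1 x.
Proof.
rewrite /fZ /cZ.
set r := `|(x %% n.+1%:Z)%Z|%N.
have hr : (x %% n.+1%:Z)%Z = r%:Z by rewrite /r -absmod_eq.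
have hrl : (r < n.+1)%N by apply: absmod_lt.
have -> : ((x + 1) %% n.+1%:Z)%Z = (r.+1 %% n.+1)%N%:Z.
  by rewrite -modz_nat -modzDml hr -[r.+1]addn1 PoszD.
rewrite (absz_nat (r.+1 %% n.+1)).
case: (ltnP r.+1 n.+1) => h.
  by rewrite modn_small // /F big_ord_recr /= addrAC subrr add0r.
have er : r = n by apply/eqP; rewrite eqn_leq -ltnS hrl.
rewrite er modnn /F big_ord0 sub0r.
have := Ffull n; rewrite /F big_ord_recr /= => /eqP; rewrite addr_eq0 => /eqP ->.
by rewrite opprK.
Qed.

Lemma tele n (y : int) d :
  \sum_(t < d) cZ n.+1 (y + t%:Z) = fZ n (y + d%:Z) - fZ n y.
Proof.
elim: d => [|d IH]; first by rewrite big_ord0 addr0 subrr.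
rewrite big_ord_recr /= IH -step.
have -> : (d.+1)%:Z = d%:Z + 1 by rewrite -[d.+1]addn1 PoszD.
by rewrite addrA [y + (_ + 1)]addrA (addrC (fZ n (y + d))) addrAC addrK addrC.
Qed.

Lemma cij_eq n (i j : int) : cij n.+1 i j = fZ n i - fZ n j.
Proof.
rewrite /cij /= tele.
set d := `|((i - j) %% n.+1%:Z)%Z|%N.
rewrite subrK; congr (_ - _).
rewrite /fZ; congr (F n `|_|%N).
have e : i - d%:Z = ((i - j) %/ n.+1%:Z)%Z * n.+1%:Z + j.
  rewrite /d -absmod_eq.
  have h := divz_eq (i - j) n.+1%:Z.
  move: h; set q := ((i - j) %/ n.+1%:Z)%Z; set r := ((i - j) %% n.+1%:Z)%Z.
  move=> h; lia.
by rewrite e modzMDl.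
Qed.

Lemma sumcij n (i : 'I_n.+1 -> int) :
  \sum_(m < n.+1) cij n.+1 (i m) (m.+1)%:Z
  = \sum_(k < n.+1) ((cnt i k)%:Z - 1) *: F n k.
Proof.
under eq_bigr do rewrite cij_eq.
rewrite sumrB /fZ (part (F n)).
have -> : \sum_(m < n.+1) F n `|((m.+1)%:Z %% n.+1%:Z)%Z|%N = \sum_(k < n.+1) F n k.
  rewrite big_ord_recr big_ord_recl /= modz_nat modnn absz_nat addrC; congr (_ + _).
  apply: eq_bigr => m _; rewrite modz_nat absz_nat /bump /= add1n modn_small //.
  by rewrite ltnS ltn_ord.
rewrite -sumrB; apply: eq_bigr => k _.
by rewrite scalerBl scale1r -natz scaler_nat.
Qed.

Definition B n (b : nat -> int) (t : nat) := \sum_(k < n.+1 | (t < k)%N) b k.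

Lemma abel n (b : nat -> int) :
  \sum_(k < n.+1) b k *: F n k = \sum_(t < n.+1) B n b t *: cnat n.+1 t.
Proof.
have e : forall k : 'I_n.+1, F n k = \sum_(t < n.+1 | (t < k)%N) cnat n.+1 t.
  move=> k; rewrite /F (big_ord_widen n.+1 (cnat n.+1)) //.
  exact: ltnW.
under eq_bigr do rewrite e scaler_sumr big_mkcond.
rewrite exchange_big /=; apply: eq_bigr => t _.
rewrite /B scaler_suml [RHS]big_mkcond; apply: eq_bigr => k _.
by case: ifP.
Qed.

Lemma Bstep n (b : nat -> int) t : (t.+1 < n.+1)%N -> B n b t = b t.+1 + B n b t.+1.
Proof.
move=> ht; rewrite /B (bigD1 (Ordinal ht)) //=; congr (_ + _).
apply: eq_bigl => k; rewrite -val_eqE /= [(t.+1 < k)%N]ltn_neqAle eq_sym.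
by rewrite andbC.
Qed.

Lemma Bn n (b : nat -> int) : B n b n = 0.
Proof. by rewrite /B big_pred0 // => k; rewrite ltnNge -ltnS ltn_ord. Qed.

Lemma cond3 n (i : 'I_n.+1 -> int) : (0 < n)%N ->
  \sum_(m < n.+1) cij n.+1 (i m) (m.+1)%:Z = 0 <-> all_one i.
Proof.
move=> n0.
rewrite sumcij (abel n (fun k => (cnt i k)%:Z - 1)); split; last first.
  move=> h; apply: big1 => t _.
  rewrite /B big1 ?scale0r // => k _; rewrite h // ?subrr //.
move/(zero_iff n (B n (fun k => (cnt i k)%:Z - 1))) => h.
set b := (fun k => (cnt i k)%:Z - 1) in h.
have hB : B n b 0 = 0.
  have hl : (n.-1 < n)%N by rewrite ltn_predL.
  by have := h (Ordinal hl); rewrite /= prednK // Bn.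
have B0 : forall t, (t < n.+1)%N -> B n b t = 0.
  case=> [|t] // ht; by rewrite (h (Ordinal (ht : (t < n)%N))).
have c1 : forall k, (0 < k < n.+1)%N -> cnt i k = 1%N.
  case=> [|k] // /andP [_ hk].
  have := Bstep b hk; rewrite !B0 ?(ltnW hk) // => /esym/eqP.
  by rewrite addr0 /b subr_eq0 => /eqP [].
have hs := sum_cnt i.
rewrite big_ord_recl /= (eq_bigr (fun _ => 1%N)) in hs; last first.
  by move=> l _; apply: c1; rewrite /bump /= add1n ltnS ltn_ord.
rewrite sum_nat_const card_ord muln1 -[X in _ = X]add1n in hs.
move/addIn: hs => h0.
by case=> [|k] // hk; apply: c1.
Qed.

Theorem mainTheorem8 (n : nat) (hn : (3 <= n)%N) (i : 'I_n -> int) :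
  ( ([seq (i m %% n%:Z)%Z | m : 'I_n] =i [seq ((m.+1)%:Z %% n%:Z)%Z | m : 'I_n])
    <-> \sum_(m < n) cZ n (i m) = 0 )
  /\
  ( \sum_(m < n) cZ n (i m) = 0
    <-> \sum_(m < n) cij n (i m) (m.+1)%:Z = 0 ).
Proof.
move: i; case: n hn => [|n] // hn i.
have n0 : (0 < n)%N by lia.
have h1 := cond1 i; have h2 := cond2 i; have h3 := cond3 i n0.
split; split; intuition.
Qed.
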